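(* There exists a divergent series of positive real terms $\sum_{n=1}^{\infty}y_n$ with $\lim_{n\to\infty}y_n=0$ such that $\{\sum_{n=1}^{\infty}(y_n-y_{\tau(n)}) : \tau\in S_\infty,\ \text{the series converges}\}=\mathbb{R}$.
   Context: $S_\infty$ denotes the set of all permutations of $\mathbb{N}$. *)

(* Defs.v *)
From Stdlib Require Import Reals.
Open Scope R_scope.

Definition is_perm_nat (tau : nat -> nat) : Prop :=
  (forall m n, tau m = tau n -> m = n) /\ (forall k, exists n, tau n = k).

Definition series_converges_to (a : nat -> R) (s : R) : Prop :=
  Un_cv (fun N => sum_f_R0 a N) s.

(* Main.v *)
Require Import Defs.
From Stdlib Require Import Bool Reals Arith Lia ZArith Lra Psatz.
Open Scope R_scope.
Ltac dlia := zify; rewrite ?Nat2Z.inj_div, ?Nat2Z.inj_mod in *; Z.div_mod_to_equations; lia.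

Definition Q (e:nat) : nat := (e+1)*(e+1).
Definition L (e:nat) : nat := 2 * Q e.
Fixpoint P (e:nat) : nat := match e with 0 => 0%nat | S e' => (P e' + L e')%nat end.
Fixpoint decode (n:nat) : nat*nat := match n with
 | 0 => (0,0)%nat
 | S n' => let (e,j) := decode n' in if S j <? L e then (e, S j) else (S e, 0%nat) end.

Lemma L_ge e : (2 <= L e)%nat. Proof. unfold L, Q. nia. Qed.
Lemma L_mono e : (L e <= L (S e))%nat. Proof. unfold L, Q. nia. Qed.

Lemma decode_valid n : (snd (decode n) < L (fst (decode n)))%nat.
Proof.
  induction n; simpl. pose proof (L_ge 0); lia.
  destruct (decode n) as [e j]; simpl in *.
  destruct (S j <? L e) eqn:H; simpl. apply Nat.ltb_lt in H; lia.
  pose proof (L_ge (S e)); lia.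
Qed.

Lemma decode_spec n : (P (fst (decode n)) + snd (decode n))%nat = n.
Proof.
  induction n; simpl. reflexivity.
  pose proof (decode_valid n) as V.
  destruct (decode n) as [e j]; simpl in *.
  destruct (S j <? L e) eqn:H; simpl. lia.
  apply Nat.ltb_ge in H. lia.
Qed.

Lemma P_lt e1 e2 : (e1 < e2)%nat -> (P e1 + L e1 <= P e2)%nat.
Proof.
  induction e2; intros H. lia.
  simpl. destruct (Nat.eq_dec e1 e2). subst; lia.
  assert (e1 < e2)%nat by lia. specialize (IHe2 H0). lia.
Qed.

Lemma decode_enc e j : (j < L e)%nat -> decode (P e + j) = (e,j).
Proof.
  intros Hj.
  pose proof (decode_valid (P e + j)) as V.
  pose proof (decode_spec (P e + j)) as Sp.
  destruct (decode (P e + j)) as [e' j']; simpl in *.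
  destruct (lt_eq_lt_dec e e') as [[H|H]|H].
  - pose proof (P_lt _ _ H). lia.
  - subst. f_equal. lia.
  - pose proof (P_lt _ _ H). lia.
Qed.

Lemma P_mono e1 e2 : (e1 <= e2)%nat -> (P e1 <= P e2)%nat.
Proof.
  intros H. destruct (Nat.eq_dec e1 e2). subst; lia.
  pose proof (P_lt e1 e2). lia.
Qed.

Definition yv (e j : nat) : R := if (j mod 2 =? 0)%nat then / INR (e+1) else / INR (L e).
Definition y (n : nat) : R := yv (fst (decode n)) (snd (decode n)).

Definition opener (p : nat) (c : nat -> nat) (e j : nat) : bool :=
  andb (j mod 2 =? p)%nat (j / 2 <? c e)%nat.
Definition part p c (e j : nat) : nat*nat :=
  if opener p c e j then (S e, S j) else
  match e, j with
  | S e', S j' => if opener p c e' j' then (e', j') else (e, j)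
  | _, _ => (e, j) end.
Definition tau p c (n : nat) : nat :=
  let q := part p c (fst (decode n)) (snd (decode n)) in (P (fst q) + snd q)%nat.

Section Perm.
Variable p : nat.
Variable c : nat -> nat.
Hypothesis Hp : (p <= 1)%nat.
Hypothesis Hc : forall e, (2 * c e + 2 <= L e)%nat.

Lemma opener_true e j : opener p c e j = true -> (j mod 2 = p /\ j / 2 < c e)%nat.
Proof. unfold opener; intros H. apply andb_true_iff in H as [H1 H2].
  apply Nat.eqb_eq in H1; apply Nat.ltb_lt in H2; auto. Qed.
Lemma opener_false e j : opener p c e j = false -> (j mod 2 <> p \/ c e <= j / 2)%nat.
Proof. unfold opener; intros H. apply andb_false_iff in H as [H1|H2].
  apply Nat.eqb_neq in H1; auto. apply Nat.ltb_ge in H2; auto. Qed.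

Lemma part_valid e j : (j < L e)%nat -> (snd (part p c e j) < L (fst (part p c e j)))%nat.
Proof.
  intros Hj. unfold part.
  destruct (opener p c e j) eqn:O.
  - apply opener_true in O. simpl. pose proof (Hc e). pose proof (L_mono e). dlia.
  - destruct e as [|e']; destruct j as [|j']; simpl; auto.
    destruct (opener p c e' j') eqn:O2; simpl; auto.
    apply opener_true in O2. pose proof (Hc e'). dlia.
Qed.

Lemma part_invol e j : (j < L e)%nat -> part p c (fst (part p c e j)) (snd (part p c e j)) = (e, j).
Proof.
  intros Hj.
  destruct (opener p c e j) eqn:O.
  - assert (E : part p c e j = (S e, S j)) by (unfold part; rewrite O; auto).
    rewrite E; simpl. unfold part.
    destruct (opener p c (S e) (S j)) eqn:O2.
    + apply opener_true in O; apply opener_true in O2. exfalso. dlia.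
    + rewrite O. reflexivity.
  - destruct e as [|e']; destruct j as [|j'];
      try (assert (E : part p c _ _ = (_, _)) by (unfold part; rewrite O; reflexivity);
           rewrite E; simpl; unfold part; rewrite O; reflexivity).
    destruct (opener p c e' j') eqn:O2.
    + assert (E : part p c (S e') (S j') = (e', j')) by (unfold part; rewrite O, O2; reflexivity).
      rewrite E; simpl. unfold part. rewrite O2. reflexivity.
    + assert (E : part p c (S e') (S j') = (S e', S j')) by (unfold part; rewrite O, O2; reflexivity).
      rewrite E; simpl. unfold part. rewrite O, O2. reflexivity.
Qed.

Lemma tau_decode n : decode (tau p c n) = part p c (fst (decode n)) (snd (decode n)).
Proof.
  unfold tau. pose proof (decode_valid n) as V.
  pose proof (part_valid _ _ V) as V2.
  destruct (part p c (fst (decode n)) (snd (decode n))) as [a b]. simpl in *.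
  apply decode_enc; auto.
Qed.

Lemma tau_invol n : tau p c (tau p c n) = n.
Proof.
  unfold tau at 1. rewrite tau_decode.
  rewrite part_invol by apply decode_valid. apply decode_spec.
Qed.


Definition K (j : nat) : nat := ((j + 1 - p) / 2)%nat.
Definition cp (e : nat) : nat := match e with 0 => 0%nat | S e' => c e' end.
Definition W (e : nat) : R :=
  if (p =? 0)%nat then / INR (e+1) - / INR (L (S e)) else / INR (L e) - / INR (e+2).
Definition F (e j : nat) : R :=
  INR (cp e - Nat.min (cp e) (K j)) * W (pred e) + INR (Nat.min (c e) (K (S j))) * W e.
Definition tm (e j : nat) : R :=
  yv e j - yv (fst (part p c e j)) (snd (part p c e j)).

Lemma W_spec e j : (j mod 2 = p)%nat -> yv e j - yv (S e) (S j) = W e.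
Proof.
  intros H. unfold yv, W.
  destruct (Nat.eq_dec p 0) as [->|Hp1].
  - rewrite H, Nat.eqb_refl. replace (S j mod 2 =? 0)%nat with false by (symmetry; apply Nat.eqb_neq; dlia). reflexivity.
  - replace (p =? 0)%nat with false by (symmetry; apply Nat.eqb_neq; auto).
    replace (j mod 2 =? 0)%nat with false by (symmetry; apply Nat.eqb_neq; dlia).
    replace (S j mod 2 =? 0)%nat with true by (symmetry; apply Nat.eqb_eq; dlia).
    replace (S e + 1)%nat with (e+2)%nat by lia. reflexivity.
Qed.

Lemma tm_open e j : opener p c e j = true -> tm e j = W e.
Proof.
  intros O. unfold tm, part. rewrite O. simpl. apply W_spec. apply opener_true in O; tauto.
Qed.

Lemma tm_close e j : opener p c e j = true -> tm (S e) (S j) = - W e.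
Proof.
  intros O2. unfold tm, part.
  destruct (opener p c (S e) (S j)) eqn:O3.
  - apply opener_true in O3; apply opener_true in O2. exfalso; dlia.
  - rewrite O2. simpl. rewrite <- (W_spec e j) by (apply opener_true in O2; tauto). ring.
Qed.

Lemma tm_zero e j : opener p c e j = false ->
  (forall e' j', e = S e' -> j = S j' -> opener p c e' j' = false) -> tm e j = 0.
Proof.
  intros O1 O2. unfold tm, part. rewrite O1.
  destruct e as [|e']; destruct j as [|j']; simpl; try ring.
  rewrite (O2 e' j') by auto. simpl. ring.
Qed.

Lemma first_slot e : INR (Nat.min (c e) (K 1)) * W e = tm e 0.
Proof.
  destruct (opener p c e 0) eqn:O.
  - rewrite tm_open by auto. apply opener_true in O.
    replace (Nat.min (c e) (K 1)) with 1%nat by (unfold K; dlia). simpl; ring.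
  - rewrite tm_zero; auto. 2: intros; discriminate.
    apply opener_false in O.
    replace (Nat.min (c e) (K 1)) with 0%nat by (unfold K; dlia). simpl; ring.
Qed.

Lemma step_in e j : (S j < L e)%nat -> F e (S j) = F e j + tm e (S j).
Proof.
  intros Hj. unfold F.
  destruct (opener p c e (S j)) eqn:O.
  - rewrite tm_open by auto. apply opener_true in O.
    replace (K (S j)) with (K j) by (unfold K; dlia).
    replace (Nat.min (c e) (K (S (S j)))) with (S (Nat.min (c e) (K j))) by (unfold K; dlia).
    rewrite S_INR. ring.
  - destruct e as [|e'].
    + rewrite tm_zero by (auto; intros; discriminate). simpl cp.
      replace (Nat.min (c 0) (K (S (S j)))) with (Nat.min (c 0) (K (S j))).
      * rewrite !Nat.min_0_l. ring.
      * apply opener_false in O. unfold K. dlia.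
    + destruct (opener p c e' j) eqn:O2.
      * rewrite tm_close by auto. simpl cp. simpl pred. apply opener_true in O2.
        replace (c e' - Nat.min (c e') (K j))%nat with (S (c e' - Nat.min (c e') (K (S j))))
          by (unfold K; dlia).
        replace (Nat.min (c (S e')) (K (S (S j)))) with (Nat.min (c (S e')) (K (S j)))
          by (unfold K; dlia).
        rewrite S_INR. ring.
      * rewrite tm_zero; auto. 2: { intros a b Ha Hb. injection Ha; injection Hb; intros; subst; auto. }
        apply opener_false in O; apply opener_false in O2. simpl cp.
        replace (c e' - Nat.min (c e') (K (S j)))%nat with (c e' - Nat.min (c e') (K j))%nat
          by (unfold K; dlia).
        replace (Nat.min (c (S e')) (K (S (S j)))) with (Nat.min (c (S e')) (K (S j)))
          by (unfold K; dlia).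
        ring.
Qed.

Lemma step_lvl e j : (S j = L e)%nat -> F (S e) 0 = F e j + tm (S e) 0.
Proof.
  intros Hj. rewrite <- first_slot. unfold F. simpl pred. simpl cp.
  assert (HL : (L e = 2 * Q e)%nat) by reflexivity.
  pose proof (Hc e) as Hce.
  replace (cp e - Nat.min (cp e) (K j))%nat with 0%nat.
  2: { destruct e as [|e']; simpl. lia. pose proof (Hc e'). pose proof (L_mono e').
       assert (HL2 : (L e' = 2 * Q e')%nat) by reflexivity. unfold K. dlia. }
  replace (Nat.min (c e) (K (S j))) with (c e) by (unfold K; dlia).
  replace (Nat.min (c e) (K 0)) with 0%nat by (unfold K; dlia).
  rewrite Nat.sub_0_r. simpl INR. ring.
Qed.

Lemma S_formula n :
  sum_f_R0 (fun k => y k - y (tau p c k)) n = F (fst (decode n)) (snd (decode n)).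
Proof.
  assert (Ht : forall k, y k - y (tau p c k) = tm (fst (decode k)) (snd (decode k))).
  { intros k. unfold y, tm. rewrite tau_decode by auto. reflexivity. }
  induction n.
  - simpl. rewrite Ht. simpl. unfold F. simpl. rewrite Rmult_0_l, Rplus_0_l.
    symmetry; apply first_slot.
  - simpl sum_f_R0. rewrite IHn, Ht. pose proof (decode_valid n) as V. simpl decode.
    destruct (decode n) as [e j]; simpl in *.
    destruct (S j <? L e) eqn:H; simpl.
    + apply Nat.ltb_lt in H. symmetry; apply step_in; auto.
    + apply Nat.ltb_ge in H. symmetry; apply step_lvl; lia.
Qed.

End Perm.

Lemma AB1 (X q a r h : R) : 0 <= X -> 0 < q -> 1 <= q*h -> 0 <= r -> q*r <= h ->
  X*q - 1 <= a -> a <= X*q -> 0 <= a -> Rabs (a*(/q - r) - X) <= (1+X)*h.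
Proof.
  intros. assert (Hq : q * /q = 1) by (field; lra).
  assert (0 < /q) by (apply Rinv_0_lt_compat; lra).
  assert (/q <= h) by nra.
  assert (a * / q <= X) by nra.
  assert (X - /q <= a * /q) by nra.
  assert (a * r <= X * h) by nra.
  apply Rabs_le; split; nra.
Qed.

Lemma AB2 (q r h : R) : 1 <= q -> 1 <= q*h -> 0 <= r -> q*r <= h -> Rabs (/q - r) <= h.
Proof.
  intros. assert (Hq : q * /q = 1) by (field; lra).
  assert (0 < /q) by (apply Rinv_0_lt_compat; lra).
  assert (/q <= h) by nra.
  assert (r <= h) by nra.
  apply Rabs_le; split; nra.
Qed.

Lemma AB3 (X q a r r' h : R) : 0 <= X -> 1 <= q -> 1 <= q*h -> 0 <= r -> 0 <= r' -> q*r <= h -> (q+1)*r' <= h ->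
  a <= X*q -> 0 <= a -> a * Rabs ((/q - r) - (/(q+1) - r')) <= 3*X*h.
Proof.
  intros. assert (Hq : q * /q = 1) by (field; lra).
  assert (Hq1 : (q+1) * /(q+1) = 1) by (field; lra).
  assert (0 < /q) by (apply Rinv_0_lt_compat; lra).
  assert (0 < /(q+1)) by (apply Rinv_0_lt_compat; lra).
  assert (E : /q - /(q+1) = /q * /(q+1)) by (field; lra).
  assert (a * (/q * /(q+1)) <= X * h).
  { assert (/q <= h) by nra. assert (/(q+1) <= /q) by (apply Rinv_le_contravar; lra).
    assert (a * /q <= X) by nra. nra. }
  assert (a * r <= X * h) by nra.
  assert (a * r' <= X * h) by nra.
  assert (Rabs ((/q - r) - (/(q+1) - r')) <= /q * /(q+1) + r + r').
  { apply Rabs_le; split; nra. }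
  nra.
Qed.

Lemma Rabs_le_inv a b : Rabs a <= b -> -b <= a <= b.
Proof. unfold Rabs; destruct (Rcase_abs a); intros; lra. Qed.

Lemma F_bound (c' c k k1 : nat) (w' w x B : R) :
  (c' <= c)%nat -> (k <= k1 <= k + 1)%nat ->
  Rabs (INR c' * w' - x) <= B -> INR c' * Rabs (w' - w) <= B -> Rabs w <= B ->
  Rabs (INR c * w - x) <= B ->
  Rabs (INR (c' - Nat.min c' k) * w' + INR (Nat.min c k1) * w - x) <= 4 * B.
Proof.
  intros Hc Hk H1 H2 H3 H4.
  assert (0 <= INR c') by apply pos_INR.
  apply Rabs_le_inv in H1. apply Rabs_le_inv in H4.
  pose proof (Rabs_le_inv _ _ H3) as H3'.
  destruct (Nat.lt_ge_cases k c') as [Hl|Hl].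
  - rewrite Nat.min_r by lia. rewrite Nat.min_r by lia.
    rewrite minus_INR by lia.
    assert (Hk1 : INR k1 = INR k \/ INR k1 = INR k + 1).
    { destruct (Nat.eq_dec k1 k) as [->|]; [left; auto|right; replace k1 with (S k) by lia; apply S_INR]. }
    assert (0 <= INR k) by apply pos_INR.
    assert (INR k <= INR c') by (apply le_INR; lia).
    assert (Habs : INR k * Rabs (w' - w) <= B).
    { eapply Rle_trans; [|apply H2]. apply Rmult_le_compat_r; [apply Rabs_pos|auto]. }
    assert (Hb : - B <= INR k * (w' - w) <= B).
    { destruct (Rle_dec 0 (w' - w)).
      - rewrite Rabs_right in Habs by lra. split; nra.
      - rewrite Rabs_left in Habs by lra. split; nra. }
    apply Rabs_le; destruct Hk1 as [E|E]; rewrite E; split; nra.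
  - rewrite Nat.min_l by lia. rewrite Nat.sub_diag. simpl INR. rewrite Rmult_0_l, Rplus_0_l.
    set (m := Nat.min c k1).
    assert (INR c' <= INR m <= INR c) by (split; apply le_INR; unfold m; lia).
    assert (Hb : - B <= INR c' * (w' - w) <= B).
    { destruct (Rle_dec 0 (w' - w)).
      - rewrite Rabs_right in H2 by lra. split; nra.
      - rewrite Rabs_left in H2 by lra. split; nra. }
    apply Rabs_le. destruct (Rle_dec 0 w); split; nra.
Qed.

Definition nfl (r : R) : nat := Z.to_nat (up r - 1).
Lemma nfl_spec r : 0 <= r -> INR (nfl r) <= r < INR (nfl r) + 1.
Proof.
  intros H. destruct (archimed r) as [A1 A2].
  assert (Hu : (0 < up r)%Z) by (apply lt_IZR; simpl; lra).
  unfold nfl. rewrite INR_IZR_INZ, Z2Nat.id by lia. rewrite minus_IZR. simpl. lra.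
Qed.
Lemma nfl_mono r s : 0 <= r -> r <= s -> (nfl r <= nfl s)%nat.
Proof.
  intros H1 H2. pose proof (nfl_spec r H1). pose proof (nfl_spec s ltac:(lra)).
  assert (nfl r < S (nfl s))%nat by (apply INR_lt; rewrite S_INR; lra). lia.
Qed.

Definition pf (x : R) : nat := if Rle_dec 0 x then 0%nat else 1%nat.
Definition E0 (x : R) : nat := (nfl (Rabs x) + 2)%nat.
Definition qq (p d : nat) : R := INR d + 1 + INR p.
Definition cf (x : R) (e : nat) : nat :=
  if (E0 x <=? e)%nat then nfl (Rabs x * qq (pf x) e) else 0%nat.

Lemma pf_le x : (pf x <= 1)%nat.
Proof. unfold pf; destruct (Rle_dec 0 x); lia. Qed.

Lemma qq_ge p d : (p <= 1)%nat -> INR d + 1 <= qq p d <= INR d + 2.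
Proof.
  intros. unfold qq. assert (INR p <= 1) by (replace 1 with (INR 1) by reflexivity; apply le_INR; lia).
  pose proof (pos_INR p). lra.
Qed.

Lemma E0_ge x : Rabs x + 1 <= INR (E0 x).
Proof.
  unfold E0. rewrite plus_INR. pose proof (nfl_spec (Rabs x) (Rabs_pos x)). simpl. lra.
Qed.

Lemma cf_spec x e : (E0 x <= e)%nat ->
  Rabs x * qq (pf x) e - 1 <= INR (cf x e) <= Rabs x * qq (pf x) e.
Proof.
  intros H. unfold cf. replace (E0 x <=? e)%nat with true by (symmetry; apply Nat.leb_le; auto).
  assert (0 <= Rabs x * qq (pf x) e).
  { pose proof (qq_ge (pf x) e (pf_le x)). pose proof (pos_INR e). pose proof (Rabs_pos x). nra. }
  pose proof (nfl_spec _ H0). lra.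
Qed.

Lemma cf_cap x e : (2 * cf x e + 2 <= L e)%nat.
Proof.
  unfold L, Q. destruct (le_lt_dec (E0 x) e) as [H|H].
  - pose proof (cf_spec x e H). pose proof (E0_ge x).
    pose proof (qq_ge (pf x) e (pf_le x)). pose proof (Rabs_pos x).
    assert (INR (E0 x) <= INR e) by (apply le_INR; auto).
    assert (INR (cf x e) + 1 <= INR ((e+1)*(e+1))).
    { rewrite mult_INR, plus_INR. simpl. nra. }
    assert (cf x e + 1 <= (e+1)*(e+1))%nat.
    { apply INR_le. rewrite plus_INR. simpl. lra. }
    lia.
  - unfold cf. replace (E0 x <=? e)%nat with false by (symmetry; apply Nat.leb_gt; auto). nia.
Qed.

Lemma cf_mono x e : (cf x e <= cf x (S e))%nat.
Proof.
  unfold cf. destruct (E0 x <=? e)%nat eqn:H1; destruct (E0 x <=? S e)%nat eqn:H2; try lia.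
  - apply nfl_mono.
    + pose proof (qq_ge (pf x) e (pf_le x)). pose proof (pos_INR e). pose proof (Rabs_pos x). nra.
    + unfold qq. rewrite S_INR. pose proof (Rabs_pos x). nra.
  - apply Nat.leb_le in H1; apply Nat.leb_gt in H2. lia.
Qed.

Definition rr (p d : nat) : R := if (p =? 0)%nat then / INR (L (S d)) else / INR (L d).
Definition sg (p : nat) : R := if (p =? 0)%nat then 1 else -1.

Lemma INR_L e : INR (L e) = 2 * ((INR e + 1) * (INR e + 1)).
Proof. unfold L, Q. rewrite mult_INR, mult_INR, plus_INR. simpl. ring. Qed.

Lemma W_dec p d : (p <= 1)%nat -> W p d = sg p * (/ qq p d - rr p d).
Proof.
  intros Hp. unfold W, sg, qq, rr.
  destruct (Nat.eq_dec p 0) as [->|H].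
  - rewrite Nat.eqb_refl, plus_INR. change (INR 1) with 1. change (INR 0) with 0. rewrite Rplus_0_r. ring.
  - replace (p =? 0)%nat with false by (symmetry; apply Nat.eqb_neq; auto).
    replace p with 1%nat by lia. rewrite !plus_INR. change (INR 1) with 1. change (INR 2) with (1+1). replace (INR d + (1+1)) with (INR d + 1 + 1) by ring. ring.
Qed.

Lemma rr_bounds p d : (p <= 1)%nat -> 0 <= rr p d /\ qq p d * rr p d <= / (INR d + 1).
Proof.
  intros Hp. pose proof (pos_INR d) as Hd. unfold rr, qq.
  destruct (Nat.eq_dec p 0) as [->|H].
  - rewrite Nat.eqb_refl. change (INR 0) with 0. rewrite INR_L, S_INR.
    set (D := 2 * ((INR d + 1 + 1) * (INR d + 1 + 1))).
    assert (0 < D) by (unfold D; nra).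
    assert (D * / D = 1) by (field; lra).
    assert ((INR d + 1) * / (INR d + 1) = 1) by (field; lra).
    assert (0 < /D) by (apply Rinv_0_lt_compat; lra).
    assert (0 < / (INR d + 1)) by (apply Rinv_0_lt_compat; lra).
    split. lra.
    assert (Hk : (INR d + 1) * (INR d + 1) <= D) by (unfold D; nra).
    assert (E : / (INR d + 1) - (INR d + 1 + 0) * / D = / (INR d + 1) * / D * (D - (INR d + 1) * (INR d + 1))) by (field; lra).
    assert (0 <= / (INR d + 1) * / D * (D - (INR d + 1) * (INR d + 1))).
    { apply Rmult_le_pos; [apply Rmult_le_pos|]; lra. }
    lra.
  - replace (p =? 0)%nat with false by (symmetry; apply Nat.eqb_neq; auto).
    replace p with 1%nat by lia. rewrite INR_L. change (INR 1) with 1.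
    set (D := 2 * ((INR d + 1) * (INR d + 1))).
    assert (0 < D) by (unfold D; nra).
    assert (0 < /D) by (apply Rinv_0_lt_compat; lra).
    assert (0 < / (INR d + 1)) by (apply Rinv_0_lt_compat; lra).
    split. lra.
    assert (E : / (INR d + 1) - (INR d + 1 + 1) * / D = / (INR d + 1) * / D * (D - (INR d + 1) * (INR d + 1 + 1))) by (unfold D; field; lra).
    assert (0 <= / (INR d + 1) * / D * (D - (INR d + 1) * (INR d + 1 + 1))).
    { apply Rmult_le_pos; [apply Rmult_le_pos|]; try lra. unfold D; nra. }
    lra.
Qed.

Lemma x_sg x : x = sg (pf x) * Rabs x.
Proof.
  unfold sg, pf. destruct (Rle_dec 0 x).
  - simpl. rewrite Rabs_right by lra. ring.
  - simpl. rewrite Rabs_left by lra. ring.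
Qed.

Lemma Rabs_sg p z : Rabs (sg p * z) = Rabs z.
Proof.
  unfold sg. rewrite Rabs_mult. destruct (p =? 0)%nat.
  - rewrite Rabs_R1. ring.
  - rewrite Rabs_left by lra. ring.
Qed.

Lemma h_facts (q : R) (d : nat) : INR d + 1 <= q -> 1 <= q * / (INR d + 1).
Proof.
  intros H. pose proof (pos_INR d).
  assert ((INR d + 1) * / (INR d + 1) = 1) by (field; lra).
  assert (0 < / (INR d + 1)) by (apply Rinv_0_lt_compat; lra). nra.
Qed.

Lemma h_mono d : / (INR (S d) + 1) <= / (INR d + 1).
Proof. pose proof (pos_INR d). rewrite S_INR. apply Rinv_le_contravar; lra. Qed.

Lemma level_bound x d j : (E0 x <= d)%nat ->
  Rabs (F (pf x) (cf x) (S d) j - x) <= 4 * ((1 + 3 * Rabs x) * / (INR d + 1)).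
Proof.
  intros Hd. unfold F. simpl pred. simpl cp.
  set (p := pf x). set (X := Rabs x). set (h := / (INR d + 1)).
  assert (Hp : (p <= 1)%nat) by apply pf_le.
  assert (HX : 0 <= X) by apply Rabs_pos.
  assert (Hh : 0 < h) by (unfold h; apply Rinv_0_lt_compat; pose proof (pos_INR d); lra).
  assert (Hhm : / (INR (S d) + 1) <= h) by apply h_mono.
  pose proof (pos_INR d). pose proof (pos_INR (S d)).
  pose proof (qq_ge p d Hp) as Q1. pose proof (qq_ge p (S d) Hp) as Q2.
  assert (Qs : qq p (S d) = qq p d + 1) by (unfold qq; rewrite S_INR; ring).
  pose proof (rr_bounds p d Hp) as [R1 R1']. pose proof (rr_bounds p (S d) Hp) as [R2 R2'].
  fold h in R1'.
  assert (Hh' : 0 < / (INR (S d) + 1)) by (apply Rinv_0_lt_compat; lra).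
  pose proof (cf_spec x d Hd) as C1. pose proof (cf_spec x (S d) ltac:(lia)) as C2.
  fold p X in C1, C2.
  pose proof (pos_INR (cf x d)). pose proof (pos_INR (cf x (S d))).
  assert (qh1 : 1 <= qq p d * h) by (apply h_facts; lra).
  assert (qh2 : 1 <= qq p (S d) * / (INR (S d) + 1)) by (apply h_facts; lra).
  assert (Hx : x = sg p * X) by apply x_sg.
  set (a1 := INR (cf x d)) in *. set (a2 := INR (cf x (S d))) in *.
  apply F_bound; try change (INR (cf x d)) with a1; try change (INR (cf x (S d))) with a2.
  - apply cf_mono.
  - unfold K. dlia.
  - rewrite W_dec by auto. 
    replace (a1 * (sg p * (/ qq p d - rr p d)) - x)
      with (sg p * (a1 * (/ qq p d - rr p d) - X)) by (rewrite Hx; ring).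
    rewrite Rabs_sg. eapply Rle_trans. apply (AB1 X (qq p d) a1 (rr p d) h); lra. nra.
  - rewrite !W_dec by auto.
    replace (sg p * (/ qq p d - rr p d) - sg p * (/ qq p (S d) - rr p (S d)))
      with (sg p * ((/ qq p d - rr p d) - (/ qq p (S d) - rr p (S d)))) by ring.
    rewrite Rabs_sg, Qs. eapply Rle_trans. apply (AB3 X (qq p d) a1 (rr p d) (rr p (S d)) h); try lra. rewrite <- Qs. lra. nra.
  - rewrite W_dec by auto. rewrite Rabs_sg. eapply Rle_trans. apply (AB2 (qq p (S d)) (rr p (S d)) (/ (INR (S d) + 1))); lra.
    nra.
  - rewrite W_dec by auto. 
    replace (a2 * (sg p * (/ qq p (S d) - rr p (S d))) - x)
      with (sg p * (a2 * (/ qq p (S d) - rr p (S d)) - X)) by (rewrite Hx; ring).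
    rewrite Rabs_sg. eapply Rle_trans. apply (AB1 X (qq p (S d)) a2 (rr p (S d)) (/ (INR (S d) + 1))); lra. nra.
Qed.

Lemma level_of n E : (P E <= n)%nat -> (E <= fst (decode n))%nat.
Proof.
  intros H. pose proof (decode_spec n). pose proof (decode_valid n).
  destruct (decode n) as [e j]; simpl in *.
  destruct (le_lt_dec E e) as [|Hl]; auto.
  pose proof (P_lt _ _ Hl). lia.
Qed.

Lemma P_ge E : (E <= P E)%nat.
Proof. induction E; simpl. lia. pose proof (L_ge E). lia. Qed.

Lemma L_pos e : 0 < INR (L e).
Proof. apply lt_0_INR. pose proof (L_ge e). lia. Qed.

Lemma yv_pos e j : 0 < yv e j.
Proof.
  unfold yv. destruct (j mod 2 =? 0)%nat; apply Rinv_0_lt_compat.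
  apply lt_0_INR; lia. apply L_pos.
Qed.

Lemma Le_ge e : INR (e + 1) <= INR (L e).
Proof. apply le_INR. unfold L, Q. nia. Qed.

Lemma yv_le e j : yv e j <= / INR (e + 1).
Proof.
  unfold yv. destruct (j mod 2 =? 0)%nat. lra.
  apply Rinv_le_contravar. apply lt_0_INR; lia. apply Le_ge.
Qed.

Lemma yv_ge e j : / INR (L e) <= yv e j.
Proof.
  unfold yv. destruct (j mod 2 =? 0)%nat. 2: lra.
  apply Rinv_le_contravar. apply lt_0_INR; lia. apply Le_ge.
Qed.

Lemma sum_lower n :
  INR (fst (decode n)) + INR (S (snd (decode n))) * / INR (L (fst (decode n))) <= sum_f_R0 y n.
Proof.
  induction n.
  - change (sum_f_R0 y 0) with (y 0). unfold y. change (decode 0) with (0,0)%nat. cbn [fst snd].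
    change (INR 0) with 0. change (INR 1) with 1. pose proof (yv_ge 0 0). lra.
  - simpl sum_f_R0. unfold y at 2. pose proof (decode_valid n) as V. simpl decode.
    destruct (decode n) as [e j]; cbn [fst snd] in *.
    destruct (S j <? L e) eqn:H; simpl fst; simpl snd.
    + pose proof (yv_ge e (S j)). rewrite S_INR with (n := S j). lra.
    + apply Nat.ltb_ge in H. assert (Hj : S j = L e) by lia. rewrite Hj in IHn.
      rewrite Rinv_r in IHn by (apply Rgt_not_eq, L_pos).
      pose proof (yv_ge (S e) 0). rewrite S_INR with (n := e). simpl (INR 1). lra.
Qed.

Lemma big_inv M eps a : 0 < eps -> 0 < a -> M / eps < a -> M * / a < eps.
Proof.
  intros He Ha H.
  assert (M < eps * a).
  { assert (M = (M / eps) * eps) by (field; lra). nra. }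
  apply Rmult_lt_reg_r with a; auto.
  rewrite Rmult_assoc, Rinv_l by lra. lra.
Qed.

Theorem mainTheorem6 :
  exists y : nat -> R,
    (forall n, 0 < y n) /\
    Un_cv y 0 /\
    ~ (exists s, series_converges_to y s) /\
    (forall x : R, exists tau : nat -> nat,
        is_perm_nat tau /\ series_converges_to (fun n => y n - y (tau n)) x).
Proof.
  exists y. split; [|split; [|split]].
  - intros n. apply yv_pos.
  - intros eps He. exists (P (nfl (/ eps))). intros n Hn.
    apply level_of in Hn. unfold R_dist. rewrite Rminus_0_r.
    unfold y. pose proof (yv_pos (fst (decode n)) (snd (decode n))).
    pose proof (yv_le (fst (decode n)) (snd (decode n))).
    rewrite Rabs_right by lra.
    set (e := fst (decode n)) in *.
    assert (0 < /eps) by (apply Rinv_0_lt_compat; lra).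
    pose proof (nfl_spec (/eps) ltac:(lra)).
    assert (INR (nfl (/eps)) <= INR e) by (apply le_INR; auto).
    rewrite plus_INR in *. simpl (INR 1) in *.
    assert (/ (INR e + 1) < eps).
    { pose proof (pos_INR e).
      rewrite <- (Rinv_inv eps). apply Rinv_lt_contravar. apply Rmult_lt_0_compat; lra. lra. }
    lra.
  - intros [s Hs]. destruct (Hs 1 Rlt_0_1) as [N HN].
    set (E := (N + nfl (Rabs s) + 2)%nat).
    specialize (HN (P E) ltac:(pose proof (P_ge E); unfold E in *; lia)).
    pose proof (sum_lower (P E)) as HL.
    rewrite <- (Nat.add_0_r (P E)) in HL. rewrite decode_enc in HL by (pose proof (L_ge E); lia).
    rewrite Nat.add_0_r in HL. cbn [fst snd] in HL.
    assert (0 <= INR 1 * / INR (L E)).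
    { apply Rmult_le_pos. apply pos_INR. left; apply Rinv_0_lt_compat, L_pos. }
    pose proof (nfl_spec (Rabs s) (Rabs_pos s)).
    assert (INR E = INR N + INR (nfl (Rabs s)) + 2) by (unfold E; rewrite !plus_INR; reflexivity).
    pose proof (pos_INR N).
    unfold R_dist in HN. pose proof (Rle_abs s). pose proof (Rle_abs (sum_f_R0 y (P E) - s)). lra.
  - intros x. exists (tau (pf x) (cf x)).
    assert (Hp := pf_le x). assert (Hc := cf_cap x). split.
    + split.
      * intros m n Hmn. rewrite <- (tau_invol (pf x) (cf x) Hp Hc m), <- (tau_invol (pf x) (cf x) Hp Hc n).
        rewrite Hmn. reflexivity.
      * intros k. exists (tau (pf x) (cf x) k). apply tau_invol; auto.
    + intros eps He.
      set (M := 4 * (1 + 3 * Rabs x)).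
      assert (HM : 0 < M) by (unfold M; pose proof (Rabs_pos x); lra).
      set (E := (S (E0 x) + nfl (M / eps))%nat).
      exists (P E). intros n Hn. apply level_of in Hn.
      unfold R_dist. rewrite S_formula by auto.
      pose proof (decode_valid n).
      destruct (decode n) as [e j]. cbn [fst snd] in *.
      destruct e as [|d]. unfold E in Hn; lia.
      eapply Rle_lt_trans. apply level_bound. unfold E in Hn; lia.
      rewrite <- Rmult_assoc. fold M. apply big_inv; auto. pose proof (pos_INR d); lra.
      assert (0 <= M / eps) by (unfold Rdiv; apply Rmult_le_pos; [lra| left; apply Rinv_0_lt_compat; lra]).
      pose proof (nfl_spec (M / eps) H0).
      assert (INR E <= INR (S d)) by (apply le_INR; lia).
      assert (INR E = INR (S (E0 x)) + INR (nfl (M / eps))) by (unfold E; apply plus_INR).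
      rewrite S_INR in *. pose proof (pos_INR (E0 x)). lra.
Qed.
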